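(* Let $\Omega\subset\mathbb{R}^d$ be a domain of finite measure. For $\Theta=(a,b)\in\mathbb{R}^d\times\mathbb{R}$ define $f_\Theta:\Omega\to\mathbb{R}$ by $f_\Theta(x):=H(a\cdot x+b)$, where $H$ is the Heaviside function. Then: 1. for any $\Theta_0=(a_0,b_0)$ with $a_0\ne0$ and any sequence $\{\Theta_n\}_{n\in\mathbb{N}}=\{(a_n,b_n)\}$ converging to $\Theta_0$, $f_{\Theta_n}\to f_{\Theta_0}$ almost everywhere in $\Omega$; 2. if in addition $\Omega$ is bounded, then for any degenerate parameter $\Theta_0=(0,b_0)$ there exists a non-degenerate $\Theta'=(a',b')$ (i.e. $a'\ne0$) such that $f_{\Theta_0}\equiv f_{\Theta'}$ in $\Omega$.
   Context: The Heaviside function is $H(t)=1$ for $t\ge0$ and $H(t)=0$ for $t<0$. *)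

(* Defs.v *)
From mathcomp Require Import all_boot all_algebra all_classical all_reals all_analysis.
Import GRing.Theory Num.Theory numFieldNormedType.Exports.
Set Implicit Arguments. Unset Strict Implicit. Unset Printing Implicit Defensive.
Local Open Scope ring_scope.
Local Open Scope classical_set_scope.

Definition heaviside (R : realType) (t : R) : R := if 0 <= t then 1 else 0.

Definition dotv (R : realType) (d : nat) (a x : 'rV[R]_d) : R :=
  \sum_(i < d) a ord0 i * x ord0 i.

Definition fTheta (R : realType) (d : nat) (a : 'rV[R]_d) (b : R) (x : 'rV[R]_d) : R :=
  heaviside (dotv a x + b).

Definition box (R : realType) (d : nat) (l u : 'rV[R]_d) : set 'rV[R]_d :=
  [set x | forall i, l ord0 i <= x ord0 i <= u ord0 i].
Definition box_vol (R : realType) (d : nat) (l u : 'rV[R]_d) : R :=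
  \prod_(i < d) (u ord0 i - l ord0 i).

Definition lebesgue_outer (R : realType) (d : nat) (A : set 'rV[R]_d) : \bar R :=
  ereal_inf [set s : \bar R | exists (l u : nat -> 'rV[R]_d),
     (forall n i, l n ord0 i <= u n ord0 i) /\
     A `<=` \bigcup_n box (l n) (u n) /\
     s = (\sum_(0 <= n <oo) (box_vol (l n) (u n))%:E)%E].

Definition lebesgue_null (R : realType) (d : nat) (A : set 'rV[R]_d) : Prop :=
  lebesgue_outer A = 0%E.

Definition domain (R : realType) (d : nat) (Om : set 'rV[R]_d) : Prop :=
  open Om /\ connected Om /\ Om !=set0.

(* Main.v *)
Require Import Defs.
From mathcomp Require Import all_boot all_algebra all_classical all_reals all_analysis.
From mathcomp Require Import ring lra.
Import GRing.Theory Num.Theory numFieldNormedType.Exports.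
Local Open Scope ring_scope.
Local Open Scope classical_set_scope.

Module Aux.
Import order.Order.TTheory.

Section outer.
Variables (R : realType) (d : nat).
Implicit Types A B : set 'rV[R]_d.

Lemma box_vol_ge0 (l u : 'rV[R]_d) : (forall i, l ord0 i <= u ord0 i) -> 0 <= box_vol l u.
Proof. by move=> h; apply: prodr_ge0 => i _; rewrite subr_ge0. Qed.

Lemma outer_ge0 A : (0 <= lebesgue_outer A)%E.
Proof.
apply/ereal_infP => _ [l [u [hlu [_ ->]]]].
by apply: nneseries_ge0 => n _ _; rewrite lee_fin box_vol_ge0.
Qed.

Lemma outer_le A B : A `<=` B -> (lebesgue_outer A <= lebesgue_outer B)%E.
Proof.
move=> AB; apply: le_ereal_inf => _ [l [u [hlu [hB ->]]]].
by exists l, u; split => //; split => //; apply: subset_trans hB.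
Qed.

Lemma null_eps A :
  (forall e : R, 0 < e -> exists (l u : nat -> 'rV[R]_d),
     (forall n i, l n ord0 i <= u n ord0 i) /\
     A `<=` \bigcup_n box (l n) (u n) /\
     (\sum_(0 <= n <oo) (box_vol (l n) (u n))%:E <= e%:E)%E) ->
  lebesgue_null A.
Proof.
move=> h; apply: le_anti; rewrite outer_ge0 andbT.
apply/lee_addgt0Pr => e e0; rewrite add0e.
have [l [u [hlu [hA hs]]]] := h e e0.
apply: le_trans hs; apply: ereal_inf_lbound.
by exists l, u.
Qed.

End outer.

Lemma null_bigcup (R : realType) (d : nat) (A : nat -> set 'rV[R]_d) :
  (forall m, lebesgue_null (A m)) -> lebesgue_null (\bigcup_m A m).
Proof.
move=> h; apply: null_eps => e e0.
have : forall m, exists lu : (nat -> 'rV[R]_d) * (nat -> 'rV[R]_d),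
    (forall n i, lu.1 n ord0 i <= lu.2 n ord0 i) /\
    A m `<=` \bigcup_n box (lu.1 n) (lu.2 n) /\
    (\sum_(0 <= n <oo) (box_vol (lu.1 n) (lu.2 n))%:E <= (e / (2 ^ m.+1)%:R)%:E)%E.
  move=> m; have := h m; rewrite /lebesgue_null => hm.
  have : (lebesgue_outer (A m) < (e / (2 ^ m.+1)%:R)%:E)%E.
    by rewrite hm lte_fin divr_gt0.
  move=> /ereal_inf_lt[_ [l [u [hlu [hA ->]]]] hlt].
  by exists (l, u); split => //; split => //; apply: ltW.
move=> /choice[G HG].
have /card_esym/ppcard_eqP[f] := card_nat2.
pose V (p : nat * nat) := (box_vol ((G p.1).1 p.2) ((G p.1).2 p.2))%:E.
have V0 p : (0 <= V p)%E by rewrite lee_fin box_vol_ge0 //; case: (HG p.1).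
exists (fun n => (G (f n).1).1 (f n).2), (fun n => (G (f n).1).2 (f n).2).
split; first by move=> n i; case: (HG (f n).1) => + _; apply.
split.
  move=> x [m _ /((HG m).2.1)[j _ hx]].
  exists (f^-1%FUN (m, j)) => //=.
  by rewrite invK ?inE.
apply: (@le_trans _ _ (\esum_(i in setT) V i)).
  rewrite [X in (X <= _)%E](_ : _ = (\sum_(i <oo | xpredT i) V (f i))%E) //.
  rewrite -(esum_pred_image V _ xpredT) ?[fun=> _]set_true//.
  by rewrite image_eq.
rewrite (_ : esum _ _ = (\sum_(i <oo) \sum_(j <oo ) V (i, j))%E); last first.
  pose J : nat -> set (nat * nat) := fun i => [set (i, j) | j in setT].
  rewrite (_ : setT = \bigcup_k J k); last first.
    by rewrite predeqE => -[a b]; split => // _; exists a => //; exists b.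
  rewrite esum_bigcupT /=; last 2 first.
    - apply/trivIsetP => i j _ _ ij.
      rewrite predeqE => -[n m] /=; split => //= -[] [_] _ [<-{n} _].
      by move=> [m' _] [] /esym/eqP; rewrite (negbTE ij).
    - by [].
  rewrite -(image_id [set: nat]) -fun_true esum_pred_image//; last first.
    by move=> n _; exact: esum_ge0.
  apply: eq_eseriesr => /= j _.
  rewrite -(esum_pred_image V (pair j) predT)//=; last first.
    by move=> ? ? _ _; exact: (@can_inj _ _ _ snd).
  by congr esum; rewrite predeqE => -[a b]; split; move=> [i _ <-]; exists i.
apply: le_trans (epsilon_trick0 xpredT (ltW e0)).
apply: lee_lim.
- apply: is_cvg_nneseries => n *.
  by apply: nneseries_ge0 => m *.
- apply: is_cvg_nneseries => n *; rewrite lee_fin divr_ge0 //; exact: ltW.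
- by near=> n; apply: lee_sum => i _; exact: (HG i).2.2.
Unshelve. all: by end_near. Qed.

Lemma grid (R : realType) (N : nat) (w z : R) : 0 <= z <= N.+1%:R * w ->
  exists m : 'I_N.+1, (m%:R * w <= z <= m.+1%:R * w).
Proof.
elim: N => [|N IH] /andP[z0 zN].
  by exists ord0; rewrite mul0r z0.
have [zl|zl] := leP z (N.+1%:R * w).
  have [m hm] := IH (introT andP (conj z0 zl)).
  by exists (widen_ord (leqnSn _) m).
by exists ord_max => /=; rewrite zN ltW.
Qed.

Lemma aux (R : fieldType) (c w N : R) n : N != 0 ->
  c * w / N * w ^+ n * N ^+ n.+1 = c * (N * w) ^+ n.+1 / N.
Proof. by move=> N0; rewrite exprMn !exprS; field. Qed.

Lemma piece_null (R : realType) (d : nat) (a : 'rV[R]_d) (b : R) (k : 'I_d)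
  (ak : a ord0 k != 0) (M : R) (M0 : 0 <= M) :
  lebesgue_null [set x | dotv a x + b = 0 /\ forall i, -M <= x ord0 i <= M].
Proof.
apply: null_eps => e e0.
pose A := \sum_i `|a ord0 i|.
pose D := A / `|a ord0 k|.
have A0 : 0 <= A by apply: sumr_ge0.
have D0 : 0 <= D by rewrite divr_ge0.
pose K := (2 * D + 1) * (2 * M) ^+ d.
have K0 : 0 <= K by rewrite mulr_ge0 ?exprn_ge0 ?mulr_ge0 ?addr_ge0 ?mulr_ge0.
pose N' := Num.truncn (K / e).
pose N := N'.+1.
have hN : K / e < N%:R by exact: truncnS_gt.
have N0 : (0 : R) < N%:R by rewrite ltr0n.
pose w := 2 * M / N%:R.
pose h := (2 * D + 1) * w / N%:R.
have w0 : 0 <= w by rewrite divr_ge0 ?mulr_ge0 // ltW.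
have h0 : 0 <= h by rewrite divr_ge0 ?mulr_ge0 ?addr_ge0 ?mulr_ge0 // ltW.
pose T := {ffun 'I_d -> 'I_N}.
pose low (t : T) i := - M + (t i)%:R * w.
pose q (t : T) := - (b + \sum_(i | i != k) a ord0 i * low t i) / a ord0 k.
pose c (t : T) := q t - D * w.
pose lb (t : T) : 'rV[R]_d := \row_i (if i == k then c t + (t k)%:R * h else low t i).
pose ub (t : T) : 'rV[R]_d := \row_i (if i == k then c t + (t k).+1%:R * h else low t i + w).
pose t0 : T := [ffun => ord0].
pose l n := if (n < #|T|)%N then lb (nth t0 (enum T) n) else 0.
pose u n := if (n < #|T|)%N then ub (nth t0 (enum T) n) else 0.
have d0 : (0 < d)%N := leq_ltn_trans (leq0n k) (ltn_ord k).
have Nw : N%:R * w = 2 * M by rewrite /w mulrC divfK // gt_eqF.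
have Nh : N%:R * h = (2 * D + 1) * w by rewrite /h mulrC divfK // gt_eqF.
have hE : h = (2 * D + 1) * w / N%:R by [].
clearbody h w.
pose V := h * w ^+ d.-1.
have volE n : box_vol (l n) (u n) = if (n < #|T|)%N then V else 0.
  rewrite /box_vol /l /u; case: ifP => _.
    rewrite (bigD1 k) //= !mxE eqxx.
    rewrite (eq_bigr (fun=> w)); last first.
      by move=> i /negbTE ik; rewrite !mxE ik addrAC subrr add0r.
    rewrite prodr_const cardC1 card_ord /V -natr1; congr (_ * _); ring.
  rewrite (eq_bigr (fun=> 0)); last by move=> i _; rewrite !mxE subrr.
  by rewrite prodr_const card_ord expr0n; case: (d) d0.
exists l, u.
split.
  move=> n i; rewrite /l /u; case: ifP => _; rewrite !mxE //.
  case: ifP => _; last by rewrite lerDl.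
  by rewrite lerD2l ler_wpM2r // ler_nat.
split.
  move=> x [hx hb].
  have gi : forall i, exists m : 'I_N, (m%:R * w <= x ord0 i + M <= m.+1%:R * w).
    move=> i; apply: grid; rewrite Nw.
    by have /andP[h1 h2] := hb i; apply/andP; split; lra.
  have [ty hty] := fin_all_exists gi.
  pose tt : T := [ffun i => ty i].
  pose S := \sum_(i | i != k) a ord0 i * x ord0 i.
  have hx' : a ord0 k * x ord0 k + S + b = 0.
    by move: hx; rewrite /dotv (bigD1 k) //=.
  have xk : x ord0 k = - (b + S) / a ord0 k.
    apply: (mulfI ak); rewrite mulrCA divff // mulr1; lra.
  have Sd : `|S - \sum_(i | i != k) a ord0 i * low tt i| <= A * w.
    rewrite -sumrB.
    apply: le_trans (ler_norm_sum _ _ _) _.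
    apply: (@le_trans _ _ (\sum_(i | i != k) `|a ord0 i| * w)).
      apply: ler_sum => i _; rewrite -mulrBr normrM ler_wpM2l //.
      have := hty i; rewrite /low ffunE => /andP[h1 h2].
      rewrite ler_norml; apply/andP; split; lra.
    rewrite -mulr_suml ler_wpM2r // /A [X in _ <= X](bigD1 k) //=.
    exact: ler_wpDl.
  have xq : `|x ord0 k - q tt| <= D * w.
    rewrite xk /q -mulrBl -/S.
    have -> : - (b + S) - - (b + \sum_(i | i != k) a ord0 i * low tt i) =
              - (S - \sum_(i | i != k) a ord0 i * low tt i) by ring.
    rewrite normrM normrN normfV /D mulrAC ler_pM2r ?invr_gt0 ?normr_gt0 //.
  have hk : exists m : 'I_N, m%:R * h <= x ord0 k - c tt <= m.+1%:R * h.
    apply: grid; rewrite Nh /c.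
    move: xq; rewrite ler_norml => /andP[h1 h2]; apply/andP; split.
      lra.
    have : 0 <= D * w by rewrite mulr_ge0.
    lra.
  have [m hm] := hk.
  pose t : T := [ffun i => if i == k then m else ty i].
  have ct : c t = c tt.
    rewrite /c /q; congr (- (b + _) / _ - _).
    by apply: eq_bigr => i ik; rewrite /low !ffunE (negbTE ik).
  have tin : t \in enum T by rewrite mem_enum.
  have ht : (index t (enum T) < #|T|)%N by rewrite cardE index_mem.
  exists (index t (enum T)) => //.
  rewrite /l /u ht nth_index //.
  move=> i; rewrite !mxE; case: ifP => [/eqP -> | /negbT ik].
    rewrite ct /t ffunE eqxx.
    by move: hm => /andP[h1 h2]; apply/andP; split; lra.
  rewrite /low /t !ffunE (negbTE ik).
  by have := hty i; move=> /andP[h1 h2]; apply/andP; split; lra.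
under eq_eseriesr do rewrite volE.
rewrite (nneseries_split 0 #|T|); last first.
  by move=> n _; case: ifP => _; rewrite lee_fin // /V mulr_ge0 ?exprn_ge0.
rewrite eseries0 ?adde0; last by move=> n; rewrite add0n leqNgt => /negbTE ->.
rewrite add0n (eq_big_nat _ _ (F2 := fun=> V%:E)); last by move=> n /andP[_ ->].
rewrite sumr_const_nat subn0.
have -> : (V%:E *+ #|T|)%R = (V *+ #|T|)%:E by rewrite EFin_natmul.
rewrite lee_fin.
rewrite card_ffun !card_ord -mulr_natr natrX.
have -> : V * N%:R ^+ d = K / N%:R.
  rewrite /V /K -Nw hE -(prednK d0) aux // gt_eqF //.
rewrite ler_pdivrMr //.
move: hN; rewrite ltr_pdivrMr // => /ltW; by rewrite mulrC.
Qed.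

Lemma pointwise (R : realType) (d : nat) (a : nat -> 'rV[R]_d) (b : nat -> R)
  (a0 : 'rV[R]_d) (b0 : R) (x : 'rV[R]_d) :
  (fun n => (a n, b n)) @ \oo --> (a0, b0) ->
  dotv a0 x + b0 != 0 ->
  (fun n => fTheta (a n) (b n) x) @ \oo --> fTheta a0 b0 x.
Proof.
move=> hcv hv.
have ha : a @ \oo --> a0 by exact: (cvg_comp _ _ hcv cvg_fst).
have hb : b @ \oo --> b0 by exact: (cvg_comp _ _ hcv cvg_snd).
have he i : (fun n => a n ord0 i) @ \oo --> a0 ord0 i.
  have /cvg_mx_entourageP h := ha.
  apply: (proj2 (@cvg_entourageP R (fmap (fun n => a n ord0 i) \oo) _ (a0 ord0 i))) => A hA.
  have hh : \forall n \near \oo, forall i j, (a0 i j, a n i j) \in A := h A hA.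
  rewrite near_simpl; apply: filterS hh => n /(_ ord0 i).
  by rewrite inE.
have hg : (fun n => dotv (a n) x + b n) @ \oo --> dotv a0 x + b0.
  apply: cvgD => //; rewrite /dotv.
  apply: (@cvg_big R _ +%R 0 xpredT add_continuous) => //.
  move=> i _; apply: cvgM => //; exact: cvg_cst.
rewrite /fTheta /heaviside.
have [vp|vn] := ltP 0 (dotv a0 x + b0).
  rewrite ltW //; apply: cvg_near_cst.
  near=> n; rewrite ifT //; apply: ltW; near: n; exact: cvgr_gt hg _ vp.
have vn' : dotv a0 x + b0 < 0 by rewrite lt_neqAle hv vn.
rewrite leNgt vn' /=; apply: cvg_near_cst.
near=> n; rewrite ifF // leNgt; apply/negbF; near: n; exact: cvgr_lt hg _ vn'.
Unshelve. all: by end_near. Qed.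

Lemma null_sub (R : realType) (d : nat) (A B : set 'rV[R]_d) :
  A `<=` B -> lebesgue_null B -> lebesgue_null A.
Proof.
move=> AB hB; apply: le_anti; rewrite outer_ge0 andbT.
by rewrite -hB outer_le.
Qed.

Lemma hyper_null (R : realType) (d : nat) (a : 'rV[R]_d) (b : R) (k : 'I_d) :
  a ord0 k != 0 -> lebesgue_null [set x | dotv a x + b = 0].
Proof.
move=> ak.
have sub : [set x | dotv a x + b = 0] `<=` \bigcup_m
    [set x | dotv a x + b = 0 /\ forall i, - (m%:R) <= x ord0 i <= m%:R].
  move=> x hx; exists (Num.truncn (\sum_i `|x ord0 i|)).+1 => //; split => // i.
  have h1 : `|x ord0 i| <= \sum_i `|x ord0 i|.
    by rewrite (bigD1 i) //= lerDl sumr_ge0.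
  have h2 := truncnS_gt (\sum_i `|x ord0 i|).
  rewrite -ler_norml; apply: le_trans h1 _; exact: ltW.
apply: null_sub sub _; apply: null_bigcup => m.
exact: (@piece_null R d a b k ak m%:R (ler0n _ m)).
Qed.

Lemma part2 (R : realType) (d : nat) (hd : (0 < d)%N) (Om : set 'rV[R]_d) :
  bounded_set Om ->
     forall b0 : R, exists (a' : 'rV[R]_d) (b' : R),
       a' != 0 /\ forall x, Om x -> fTheta 0 b0 x = fTheta a' b' x.
Proof.
move=> hbd b0.
case: hbd => M [_ hM].
have hB : forall x, Om x -> `|x| <= M + 1.
  by move=> x Ox; apply: (hM (M + 1)); rewrite ?ltrDl.
pose k0 : 'I_d := Ordinal hd.
pose a' : 'rV[R]_d := \row_i (if i == k0 then 1 else 0).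
have dotE x : dotv a' x = x ord0 k0.
  rewrite /dotv (bigD1 k0) //= big1 ?addr0 => [|i ik]; rewrite mxE.
    by rewrite eqxx mul1r.
  by rewrite (negbTE ik) mul0r.
have dot0 x : dotv 0 x = 0.
  by rewrite /dotv big1 // => i _; rewrite mxE mul0r.
have hx x : Om x -> `|x ord0 k0| <= M + 1.
  move=> Ox; apply: le_trans (hB x Ox).
  have -> : `|x| = mx_norm x by [].
  rewrite mx_normrE.
  exact: (le_bigmax _ (fun ij : 'I_1 * 'I_d => `|x ij.1 ij.2|) (ord0, k0)).
have a'0 : a' != 0.
  apply/eqP => h; have := congr1 (fun m : 'rV[R]_d => m ord0 k0) h.
  by rewrite !mxE eqxx => /eqP; rewrite oner_eq0.
have [b0p|b0n] := leP 0 b0.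
  exists a', (M + 2); split => // x Ox.
  rewrite /fTheta /heaviside dotE dot0 add0r b0p ifT //.
  by have := hx x Ox; rewrite ler_norml => /andP[h1 h2]; lra.
exists a', (- (M + 2)); split => // x Ox.
rewrite /fTheta /heaviside dotE dot0 add0r.
have -> : (0 <= b0) = false by rewrite leNgt b0n.
have -> // : (0 <= x ord0 k0 - (M + 2)) = false.
have := hx x Ox; rewrite ler_norml => /andP[h1 h2].
by apply/negbTE; rewrite -ltNge; lra.
Qed.

End Aux.
Import Aux.

Theorem mainTheorem15 (R : realType) (d : nat) (hd : (0 < d)%N)
  (Om : set 'rV[R]_d) (hdom : domain Om)
  (hfin : (lebesgue_outer Om < +oo)%E) :
  (forall (a0 : 'rV[R]_d) (b0 : R), a0 != 0 ->
     forall (a : nat -> 'rV[R]_d) (b : nat -> R),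
       (fun n => (a n, b n)) @ \oo --> (a0, b0) ->
       lebesgue_null [set x | Om x /\
         ~ ((fun n => fTheta (a n) (b n) x) @ \oo --> fTheta a0 b0 x)]) /\
  (bounded_set Om ->
     forall b0 : R, exists (a' : 'rV[R]_d) (b' : R),
       a' != 0 /\ forall x, Om x -> fTheta 0 b0 x = fTheta a' b' x).
Proof.
split; last exact: part2.
move=> a0 b0 ha0 a b hcv.
have [k ak] : exists k, a0 ord0 k != 0.
  apply: (contra_notP _ (elimN eqP ha0)) => nk.
  apply/rowP => j; rewrite mxE; apply/eqP.
  by apply: contra_notT nk => hj; exists j.
apply: (@null_sub R d _ _ _ (@hyper_null R d a0 b0 k ak)).
move=> x [_ hx] /=; apply/eqP.
by apply: contra_notT hx => hv; exact: pointwise hcv hv.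
Qed.
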